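(* Let $R$ be a commutative ring and $\mathcal A$ an $R$-algebra whose structure map $R\to\mathcal A$ is injective (so $R\subseteq\mathcal A$). Then $\mathcal A$ is a strongly simple $R$-algebra if and only if the following three statements hold: (i) $R$ is an integral domain; (ii) $\mathcal A\simeq K_R$ as $R$-algebras; (iii) $K_R$ as an $R$-algebra is strongly simple.
   Context: Algebras are associative, unital and nonzero. $K_R$ denotes the field of fractions of an integral domain $R$. An $R$-submodule $M$ of $\mathcal A$ is a (two-sided) Mathieu subspace if whenever $a\in\mathcal A$ satisfies $a^m\in M$ for all $m\ge1$, then for all $b,c\in\mathcal A$ there is $N$ with $ba^mc\in M$ for all $m\ge N$. $\mathcal A$ is a strongly simple $R$-algebra if its only Mathieu subspaces are $0$ and $\mathcal A$. *)

(* Defs.v *)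
From HB Require Import structures.
From mathcomp Require Import all_boot all_algebra.
Set Implicit Arguments. Unset Strict Implicit. Unset Printing Implicit Defensive.
Import GRing.Theory.
Local Open Scope ring_scope.

(* Mathieu subspaces and strong simplicity for a ring [A] on which a
   commutative ring [R] acts by a scalar action [act] (for an R-algebra,
   [act] is [*:%R]; for a field K receiving R via f, it is [fun r x => f r * x]). *)

Definition is_submodule (R : comNzRingType) (A : nzRingType)
  (act : R -> A -> A) (M : A -> Prop) : Prop :=
  [/\ M 0,
      (forall x y, M x -> M y -> M (x + y)) &
      (forall (r : R) x, M x -> M (act r x))].

Definition is_Mathieu_subspace (R : comNzRingType) (A : nzRingType)
  (act : R -> A -> A) (M : A -> Prop) : Prop :=
  is_submodule act M /\
  forall a : A, (forall m : nat, (1 <= m)%N -> M (a ^+ m)) ->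
    forall b c : A, exists N : nat, forall m : nat, (N <= m)%N -> M (b * a ^+ m * c).

Definition strongly_simple_act (R : comNzRingType) (A : nzRingType)
  (act : R -> A -> A) : Prop :=
  forall M : A -> Prop, is_Mathieu_subspace act M ->
    (forall x, M x <-> x = 0) \/ (forall x, M x).

Definition strongly_simple (R : comNzRingType) (A : algType R) : Prop :=
  strongly_simple_act (fun (r : R) (x : A) => r *: x).

Definition is_integral_domain (R : comNzRingType) : Prop :=
  forall x y : R, x * y = 0 -> x = 0 \/ y = 0.

Definition is_field_of_fractions (R : comNzRingType) (K : fieldType)
  (f : {rmorphism R -> K}) : Prop :=
  injective f /\ forall x : K, exists a b : R, f b != 0 /\ x = f a / f b.

Definition alg_iso_to (R : comNzRingType) (A : algType R) (K : fieldType)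
  (f : {rmorphism R -> K}) : Prop :=
  exists phi : {rmorphism A -> K},
    bijective phi /\ forall (r : R) (a : A), phi (r *: a) = f r * phi a.

(* Main.v *)
From HB Require Import structures.
Require Import Defs.
From mathcomp Require Import all_boot all_algebra.
From Stdlib Require Import Classical.
Local Open Scope ring_scope.
Import GRing.Theory.

Section FieldOf.
Variables (R : comNzRingType) (A : algType R).
Variable hcomm : commutative (@GRing.mul A).
Variable hinv : forall x : A, exists y : A, (x != 0) ==> (y * x == 1).
Definition FA (h1 : commutative (@GRing.mul A))
  (h2 : forall x : A, exists y : A, (x != 0) ==> (y * x == 1)) : Type := A.
HB.instance Definition _ := GRing.NzRing.on (FA hcomm hinv).
HB.instance Definition _ := GRing.PzRing_hasCommutativeMul.Build (FA hcomm hinv) hcomm.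
Definition FAinv (x : FA hcomm hinv) : FA hcomm hinv :=
  if x == 0 then 0 else xchoose (hinv x).
Lemma FAmulV (x : FA hcomm hinv) : x != 0 -> FAinv x * x = 1.
Proof. move=> hx; rewrite /FAinv ifN //.
  by move: (xchooseP (hinv x)) => /implyP/(_ hx)/eqP. Qed.
Lemma FAinv0 : FAinv 0 = 0. Proof. by rewrite /FAinv ifT. Qed.
HB.instance Definition _ := GRing.ComNzRing_isField.Build (FA hcomm hinv) FAmulV FAinv0.
End FieldOf.

Section Forward.
Variables (R : comNzRingType) (A : algType R).
Hypothesis SS : strongly_simple A.

Lemma central_ideal (z : A) : (forall b, b * z = z * b) ->
  z = 0 \/ exists w, z * w = 1.
Proof.
move=> hz.
pose M := fun x : A => exists w, x = z * w.
have MM : is_Mathieu_subspace (fun (r : R) (x : A) => r *: x) M.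
  split; first split.
  - by exists 0; rewrite mulr0.
  - by move=> x y [w1 ->] [w2 ->]; exists (w1 + w2); rewrite mulrDr.
  - by move=> r x [w ->]; exists (r *: w); rewrite scalerAr.
  move=> a Ha b c; exists 1%N => m Hm.
  have [w ->] := Ha m Hm; exists (b * w * c).
  by rewrite mulrA hz -!mulrA.
case: (SS _ MM) => [H|H].
  by left; apply/(H z).1; exists 1; rewrite mulr1.
by right; have [w Hw] := H 1; exists w.
Qed.

Lemma sq0 (n : A) : n * n = 0 -> n = 0.
Proof.
move=> hn.
pose M := fun x : A => exists r : R, x = r *: n.
have MM : is_Mathieu_subspace (fun (r : R) (x : A) => r *: x) M.
  split; first split.
  - by exists 0; rewrite scale0r.
  - by move=> x y [r1 ->] [r2 ->]; exists (r1 + r2); rewrite scalerDl.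
  - by move=> r x [r1 ->]; exists (r * r1); rewrite scalerA.
  move=> a Ha b c; exists 2%N => m Hm.
  have [r1 E] := Ha 1%N isT; rewrite expr1 in E; rewrite E.
  have nm : n ^+ m = 0 by rewrite -(subnK Hm) exprD expr2 hn mulr0.
  by exists 0; rewrite scale0r exprZn nm scaler0 mulr0 mul0r.
case: (SS _ MM) => [H|H].
  by apply/(H n).1; exists 1; rewrite scale1r.
have [r Hr] := H 1.
have : (1 : A) = 0 by rewrite -{1}(mulr1 1) Hr -scalerAl -scalerAr hn !scaler0.
by move/eqP; rewrite oner_eq0.
Qed.

Lemma idem (e : A) : e * e = e -> e = 0 \/ e = 1.
Proof.
move=> he.
have h0 : (1 - e) * e = 0 by rewrite mulrBl mul1r he subrr.
have h0' : e * (1 - e) = 0 by rewrite mulrBr mulr1 he subrr.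
have hc : forall b, b * e = e * b.
  move=> z.
  have E1 : e * z * (1 - e) = 0.
    apply: sq0; rewrite -!mulrA (mulrA (1 - e)) h0 mul0r.
    by rewrite !mulr0.
  have E2 : (1 - e) * z * e = 0.
    apply: sq0; rewrite -!mulrA (mulrA e) h0' mul0r.
    by rewrite !mulr0.
  have E1' : e * z = e * z * e.
    by apply/eqP; rewrite -subr_eq0 -{1}(mulr1 (e*z)) -mulrBr E1.
  have E2' : z * e = e * z * e.
    by apply/eqP; rewrite -subr_eq0 -E2 !mulrBl mul1r.
  by rewrite E2' -E1'.
case: (central_ideal e hc) => [->|[w hw]]; first by left.
right; have : e * (e * w) = e * w by rewrite mulrA he.
by rewrite hw mulr1.
Qed.

Lemma alg_central (r : R) (b : A) : b * r%:A = r%:A * b.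
Proof. by rewrite mulr_algl mulr_algr. Qed.

Lemma P1 (r : R) : r%:A = 0 :> A \/ exists w : A, r%:A * w = 1.
Proof. apply: central_ideal => b; exact: alg_central. Qed.

Lemma inv_central (u w : A) : (forall b, b * u = u * b) -> u * w = 1 ->
  forall b, b * w = w * b.
Proof.
move=> hu hw b.
have hw' : w * u = 1 by rewrite hu.
rewrite -[b * w]mul1r -hw' -mulrA (mulrA u) -hu -mulrA hw mulr1.
by [].
Qed.

Lemma P2 (y : A) : exists r s : R, (r%:A != 0 :> A) /\ r *: y = s%:A.
Proof.
apply: NNPP => NP.
pose M := fun x : A => exists r : R, x = r *: y.
have a0 : forall a : A, (forall m, (1 <= m)%N -> M (a ^+ m)) -> a = 0.
  move=> a Ha.
  have [r1 E1] := Ha 1%N isT; rewrite expr1 in E1.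
  have [r2 E2] := Ha 2%N isT.
  case: (P1 r1) => [u0|[w hw]].
    by rewrite E1 -mulr_algl u0 mul0r.
  have hu := alg_central r1.
  have hwu : w * r1%:A = 1 by rewrite hu.
  have yy : (r1 * r1) *: (y * y) = r2 *: y.
    by rewrite -E2 E1 expr2 -scalerAl -scalerAr scalerA.
  have tu : (r1 * r1) *: y = r1%:A * a.
    by rewrite E1 mulr_algl scalerA.
  have ta : (r1 * r1) *: y = 0 -> a = 0.
    by move=> t0; rewrite -[a]mul1r -hwu -mulrA -tu t0 mulr0.
  have tt : ((r1 * r1) *: y) * ((r1 * r1) *: y) = r2%:A * ((r1 * r1) *: y).
    rewrite mulr_algl -scalerAl -scalerAr yy !scalerA.
    by rewrite mulrC.
  move: tu ta tt; set t := (r1 * r1) *: y => tu ta tt.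
  case: (P1 r2) => [v0|[w' hw']].
    by apply: ta; apply: sq0; rewrite tt v0 mul0r.
  have hv := alg_central r2.
  have hw'c := inv_central _ _ hv hw'.
  have hw'v : w' * r2%:A = 1 by rewrite hv.
  have ee : (w' * t) * (w' * t) = w' * t.
    by rewrite -mulrA (mulrA t w') hw'c -mulrA tt (mulrA w' r2%:A) hw'v mul1r.
  have te : t = r2%:A * (w' * t) by rewrite mulrA hw' mul1r.
  case: (idem _ ee) => [e0|e1].
    by apply: ta; rewrite te e0 mulr0.
  exfalso; apply: NP; exists (r1 * r1), r2; split.
    apply/eqP => h.
    have uu : (r1 * r1)%:A = r1%:A * r1%:A :> A by rewrite mulr_algl scalerA.
    have : (w * w) * (r1%:A * r1%:A) = 1.
      by rewrite -mulrA (mulrA w r1%:A) hwu mul1r hwu.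
    by rewrite -uu h mulr0 => /esym/eqP; rewrite oner_eq0.
  by rewrite -/t te e1 mulr1.
have MM : is_Mathieu_subspace (fun (r : R) (x : A) => r *: x) M.
  split; first split.
  - by exists 0; rewrite scale0r.
  - by move=> x z [r1 ->] [r2 ->]; exists (r1 + r2); rewrite scalerDl.
  - by move=> r x [r1 ->]; exists (r * r1); rewrite scalerA.
  move=> a Ha b c; exists 1%N => m Hm; exists 0.
  by rewrite (a0 a Ha) expr0n eqn0Ngt Hm /= mulr0 mul0r scale0r.
case: (SS _ MM) => [H|H].
  have y0 : y = 0 by apply/(H y).1; exists 1; rewrite scale1r.
  apply: NP; exists 1, 0; split; first by rewrite scale1r oner_neq0.
  by rewrite y0 scaler0 scale0r.
have [r0 Hr] := H 1.
apply: NP; exists r0, 1; split; last by rewrite -Hr scale1r.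
apply/eqP => h; have : (1:A) = 0 by rewrite Hr -mulr_algl h mul0r.
by move/eqP; rewrite oner_eq0.
Qed.

Lemma xcent (x : A) b : b * x = x * b.
Proof.
have [r [s [hr hx]]] := P2 x.
case: (P1 r) => [h|[w hw]]; first by rewrite h eqxx in hr.
have hu := alg_central r.
have wc := inv_central _ _ hu hw.
have hwu : w * r%:A = 1 by rewrite hu.
have -> : x = w * s%:A by rewrite -hx -mulr_algl mulrA hwu mul1r.
by rewrite mulrA wc -!mulrA alg_central.
Qed.

Lemma A_comm : commutative (@GRing.mul A).
Proof. by move=> x z; rewrite xcent. Qed.

Lemma A_inv : forall x : A, exists y : A, (x != 0) ==> (y * x == 1).
Proof.
move=> x; case: (eqVneq x 0) => [->|hx]; first by exists 0.
case: (central_ideal x (fun b => xcent x b)) => [h|[w hw]].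
  by rewrite h eqxx in hx.
by exists w; rewrite -xcent hw eqxx.
Qed.

Lemma domain (inj : injective (fun r : R => r%:A : A)) : is_integral_domain R.
Proof.
have z0 : forall x : R, x%:A = 0 :> A -> x = 0.
  by move=> x h; apply: inj; rewrite /= h scale0r.
move=> x y hxy.
have E : (x * y)%:A = x%:A * y%:A :> A by rewrite mulr_algl scalerA.
case: (P1 x) => [h|[w hw]]; first by left; apply: z0.
right; apply: z0.
have hu := alg_central x.
have hwu : w * x%:A = 1 by rewrite hu.
have -> : y%:A = w * (x%:A * y%:A) :> A by rewrite mulrA hwu mul1r.
by rewrite -E hxy scale0r mulr0.
Qed.
End Forward.

Lemma transport (R : comNzRingType) (A : algType R) (K : fieldType)
  (f : {rmorphism R -> K}) (phi : {rmorphism A -> K}) :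
  bijective phi -> (forall r a, phi (r *: a) = f r * phi a) ->
  strongly_simple_act (fun r (x : K) => f r * x) -> strongly_simple A.
Proof.
move=> [g gK Kg] hl SSK M [[M0 MD MZ] MM].
pose M' := fun y : K => M (g y).
have gD : forall x y, g (x + y) = g x + g y.
  by move=> x y; apply: (can_inj gK); rewrite rmorphD !Kg.
have gM : forall x y, g (x * y) = g x * g y.
  by move=> x y; apply: (can_inj gK); rewrite rmorphM !Kg.
have g0 : g 0 = 0 by apply: (can_inj gK); rewrite rmorph0 Kg.
have gX : forall a m, g (a ^+ m) = g a ^+ m.
  by move=> a m; apply: (can_inj gK); rewrite rmorphXn !Kg.
have gZ : forall r x, g (f r * x) = r *: g x.
  by move=> r x; apply: (can_inj gK); rewrite hl !Kg.
have MM' : is_Mathieu_subspace (fun r x => f r * x) M'.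
  split; first split.
  - by rewrite /M' g0.
  - by move=> x y hx hy; rewrite /M' gD; apply: MD.
  - by move=> r x hx; rewrite /M' gZ; apply: MZ.
  move=> a Ha b c.
  have [N HN] := MM (g a) (fun m hm => eq_ind _ M (Ha m hm) _ (gX a m)) (g b) (g c).
  by exists N => m hm; rewrite /M' !gM gX; apply: HN.
case: (SSK _ MM') => [H|H]; [left|right].
- move=> x; split; last by move=> ->.
  move=> hx; apply: (can_inj gK); rewrite rmorph0; apply/H; rewrite /M' gK //.
- by move=> x; rewrite -(gK x); apply: H.
Qed.

Theorem theorem6p2 (R : comNzRingType) (A : algType R)
  (inj : injective (fun r : R => r%:A : A)) :
  strongly_simple A <->
  (is_integral_domain R /\
   exists (K : fieldType) (f : {rmorphism R -> K}),
     is_field_of_fractions f /\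
     alg_iso_to A f /\
     strongly_simple_act (fun (r : R) (x : K) => f r * x)).
Proof.
split.
- move=> SS; split; first exact: domain _ _ SS inj.
  pose hc := A_comm _ _ SS. pose hi := A_inv _ _ SS.
  exists (FA R A hc hi), (in_alg A : {rmorphism R -> FA R A hc hi}).
  split; [split|split].
  + by move=> x y /= h; apply: inj.
  + move=> x; have [r [s [hr hx]]] := P2 _ _ SS x.
    exists s, r; split; first exact: hr.
    rewrite /= -hx -[r *: x]mulr_algl (mulrC (r%:A : FA R A hc hi)) mulfK //.
  + exists (idfun : {rmorphism A -> FA R A hc hi}); split; first by exists idfun.
    by move=> r a /=; rewrite mulr_algl.
  + move=> M [[M0 MD MZ] MM].
    case: (SS M) => [|H|H]; [|by left|by right].
    split; first split => //.
    - by move=> r x hx; rewrite -mulr_algl; apply: MZ.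
    - exact: MM.
- move=> [dom [K [f [ff [[phi [phib phil]] SSK]]]]].
  exact: transport phib phil SSK.
Qed.
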